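(* Let $n\ge3$ and $S=(a_1,\dots,a_n)$ with positive integer entries. Then $J(S)$ equals the set of $j\in\{1,\dots,n\}$ such that $S$ is not minimal with respect to $<^j$, i.e. such that there exists $S'\in(\mathbb{N}\setminus\{0\})^n$ with $S'<^jS$.
   Context: $S_i$ denotes $S$ with the $i$-th entry removed; $J(S)=\{i: a_i\nmid\mathrm{lcm}(S_i)\}$; $g_i(S)=\gcd(a_i,\mathrm{lcm}(S_i))$. For $S=(a_1,\dots,a_n)$, $S'=(a'_1,\dots,a'_n)$, $S\le^iS'$ means $S_i=S'_i$ and $g_i(S')\mid a_i\mid a'_i$; $S<^iS'$ means $S\le^iS'$ and $S\neq S'$. *)

(* Defs.v *)
From mathcomp Require Import all_boot.
Set Implicit Arguments. Unset Strict Implicit. Unset Printing Implicit Defensive.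

(* A sequence S = (a_1,...,a_n) is a finite function 'I_n -> nat (0-based indices). *)

Definition lcm_except n (S : {ffun 'I_n -> nat}) (i : 'I_n) : nat :=
  \big[lcmn/1%N]_(k < n | k != i) S k.

Definition Jset n (S : {ffun 'I_n -> nat}) : {set 'I_n} :=
  [set i | ~~ (S i %| lcm_except S i)].

Definition gi n (S : {ffun 'I_n -> nat}) (i : 'I_n) : nat :=
  gcdn (S i) (lcm_except S i).

Definition le_at n (i : 'I_n) (S S' : {ffun 'I_n -> nat}) : Prop :=
  (forall k : 'I_n, k != i -> S k = S' k) /\ (gi S' i %| S i) /\ (S i %| S' i).

Definition lt_at n (i : 'I_n) (S S' : {ffun 'I_n -> nat}) : Prop :=
  le_at i S S' /\ S <> S'.

(* Main.v *)
Require Import Defs.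
From mathcomp Require Import all_boot.

Theorem lemma4p11 (n : nat) (S : {ffun 'I_n -> nat}) :
  3 <= n -> (forall k : 'I_n, 0 < S k) ->
  forall j : 'I_n,
    j \in Jset S <->
    exists S' : {ffun 'I_n -> nat}, (forall k : 'I_n, 0 < S' k) /\ lt_at j S' S.
Proof.
move=> _ Spos j; rewrite inE; split.
- move=> Hnd.
  exists [ffun k => if k == j then gcdn (S j) (lcm_except S j) else S k].
  split; first by move=> k; rewrite ffunE; case: eqP => _ //; rewrite gcdn_gt0 Spos.
  split; first (split; last split).
  + by move=> k /negbTE Hk; rewrite ffunE Hk.
  + by rewrite ffunE eqxx.
  + by rewrite ffunE eqxx dvdn_gcdl.
  + move=> E; have := congr1 (fun f : {ffun 'I_n -> nat} => f j) E; rewrite /= ffunE eqxx.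
    by move/gcdn_idPl; rewrite (negbTE Hnd).
- case=> S' [S'pos [[Hk [Hg Hd]] Hne]].
  apply/negP => Hdv; apply: Hne; apply/ffunP => k.
  case: (eqVneq k j) => [->|/Hk //].
  move: Hg; rewrite /gi (gcdn_idPl Hdv) => Hg.
  by apply/eqP; rewrite eqn_dvd Hg Hd.
Qed.
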